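(* Let $n\ge2$, $\Delta\subset B_n$ a proper ideal, and let $\Delta^{\mathrm{aug}}$ denote the same family $\Delta$ regarded as a proper ideal of $B_{n+1}$. Then for $0\le i\le n$, $$h_i(\mathrm{Bier}(B_{n+1},\Delta^{\mathrm{aug}}))=h_{i-1}(\mathrm{Bier}(B_n,\Delta))+f_i(\Delta),$$ with the convention $h_{-1}=0$.
   Context: $B_m$ is the Boolean lattice of subsets of $[1,m]$. A proper ideal $\Delta\subset B_m$ is a nonempty family of subsets of $[1,m]$ closed under taking subsets with $[1,m]\notin\Delta$; $f_i(\Delta)$ is the number of sets of cardinality $i$ in $\Delta$. The Bier sphere $\mathrm{Bier}(B_m,\Delta)$ is the simplicial complex whose faces are the pairs $(B,C)$ with $B\subsetneq C\subseteq[1,m]$, $B\in\Delta$, $C\notin\Delta$, with $(B',C')$ a face of $(B,C)$ iff $B'\subseteq B$ and $C\subseteq C'$; the face $(B,C)$ has $|B|+m-|C|$ vertices, and all facets have $m-1$ vertices. For such a complex $\Gamma$, $f_j(\Gamma)$ is the number of faces with $j$ vertices ($f_0=1$) and $h_i(\Gamma):=\sum_{j=0}^{m-1}(-1)^{i+j}\binom{m-1-j}{m-1-i}f_j(\Gamma)$ for $0\le i\le m-1$, and $h_i:=0$ otherwise. *)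

(* Defs.v *)
(* Subsets of [1,m] are modelled as {set 'I_m} (element k+1 <-> ordinal k). *)
From mathcomp Require Import all_boot all_order all_algebra.
Set Implicit Arguments. Unset Strict Implicit. Unset Printing Implicit Defensive.
Import GRing.Theory Num.Theory.
Local Open Scope ring_scope.

Definition is_proper_ideal (m : nat) (D : {set {set 'I_m}}) : Prop :=
  [/\ D != set0,
      (forall A B : {set 'I_m}, B \subset A -> A \in D -> B \in D)
    & [set: 'I_m] \notin D].

Definition fD (m : nat) (D : {set {set 'I_m}}) (i : nat) : nat :=
  #|[set A in D | #|A| == i]|.

Definition bier_face (m : nat) (D : {set {set 'I_m}}) (p : {set 'I_m} * {set 'I_m}) : bool :=
  [&& p.1 \proper p.2, p.1 \in D & p.2 \notin D].

Definition bier_nverts (m : nat) (p : {set 'I_m} * {set 'I_m}) : nat :=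
  (#|p.1| + m - #|p.2|)%N.

Definition fBier (m : nat) (D : {set {set 'I_m}}) (j : nat) : nat :=
  #|[set p | bier_face D p & bier_nverts p == j]|.

Definition hBier (m : nat) (D : {set {set 'I_m}}) (i : nat) : int :=
  if (i <= m.-1)%N then
    \sum_(0 <= j < m) (-1) ^+ (i + j) * ('C(m.-1 - j, m.-1 - i))%:Z * (fBier D j)%:Z
  else 0.

Definition aug (m : nat) (D : {set {set 'I_m}}) : {set {set 'I_m.+1}} :=
  [set widen_ord (leqnSn m) @: (B : {set 'I_m}) | B in D].

(* Main.v *)
Require Import Defs.
From mathcomp Require Import all_boot all_order all_algebra zify ring.
Import GRing.Theory Num.Theory.

Lemma card_pairs (T : finType) (P : T -> T -> bool) :
  #|[set p : T * T | P p.1 p.2]| = \sum_(B : T) \sum_(C : T) (P B C : nat).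
Proof.
rewrite -sum1_card pair_big /= big_mkcond /=.
by apply: eq_bigr => p _; rewrite inE; case: (P _ _).
Qed.

Section Aug.
Variable n : nat.
Definition w : 'I_n -> 'I_n.+1 := widen_ord (leqnSn n).
Definition W (C : {set 'I_n}) : {set 'I_n.+1} := w @: C.
Definition Wm (C : {set 'I_n}) : {set 'I_n.+1} := ord_max |: W C.

Lemma w_inj : injective w.
Proof. by move=> x y /(congr1 val) /= /val_inj. Qed.

Lemma W_inj : injective W.
Proof. exact: imset_inj w_inj. Qed.

Lemma cardW C : #|W C| = #|C|.
Proof. exact: card_imset w_inj. Qed.

Lemma maxW C : ord_max \notin W C.
Proof.
apply/imsetP => -[x _] /(congr1 val) /= E.
by move: (ltn_ord x); rewrite -E ltnn.
Qed.

Lemma cardWm C : #|Wm C| = #|C|.+1.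
Proof. by rewrite cardsU1 maxW cardW. Qed.

Lemma Wm_inj : injective Wm.
Proof.
move=> B C E; apply: W_inj.
by rewrite -(setU1K (maxW B)) -(setU1K (maxW C)) -/(Wm B) E.
Qed.

Lemma subW B C : (W B \subset W C) = (B \subset C).
Proof.
apply/idP/idP; last exact: imsetS.
move=> /subsetP H; apply/subsetP => x xB.
have : w x \in W C by apply: H; apply: imset_f.
by rewrite /W mem_imset //; exact: w_inj.
Qed.

Lemma subWm B C : (W B \subset Wm C) = (B \subset C).
Proof.
rewrite -subW; apply/idP/idP.
  move=> /subsetP H; apply/subsetP => x xB.
  move: (H x xB); rewrite !inE; case/orP => // /eqP E.
  by move: (maxW B); rewrite -E xB.
move=> H; apply: subset_trans H _; exact: subsetUr.
Qed.

Lemma properW B C : (W B \proper W C) = (B \proper C).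
Proof. by rewrite !properE !subW. Qed.

Lemma properWm B C : (W B \proper Wm C) = (B \subset C).
Proof.
rewrite properE subWm; case: (B \subset C) => //=.
apply/negP => /subsetP H.
by move: (maxW B) (H ord_max (setU11 _ _)) => /negP.
Qed.

Lemma memW_aug (D : {set {set 'I_n}}) C : (W C \in aug D) = (C \in D).
Proof. rewrite /aug; exact: (mem_imset _ _ W_inj). Qed.

Lemma memWm_aug (D : {set {set 'I_n}}) C : (Wm C \in aug D) = false.
Proof.
apply/imsetP => -[B _] E.
have : ord_max \in Wm C by exact: setU11.
by rewrite E => H; move: (maxW B); rewrite /W H.
Qed.

Lemma split_sum (F : {set 'I_n.+1} -> nat) :
  \sum_(C : {set 'I_n.+1}) F C = \sum_(C : {set 'I_n}) F (W C) + \sum_(C : {set 'I_n}) F (Wm C).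
Proof.
rewrite (bigID (fun C : {set 'I_n.+1} => ord_max \in C)) /= addnC; congr (_ + _).
  have -> : \sum_(C : {set 'I_n.+1} | ord_max \notin C) F C = \sum_(C in [set W C0 | C0 in [set: {set 'I_n}]]) F C.
    apply: eq_bigl => C; apply/idP/imsetP.
      move=> H; exists (w @^-1: C); first by [].
      apply/setP => x; apply/idP/imsetP.
        move=> xC; have xm : x != ord_max by apply: contraNneq H => <-.
        have xn : x < n by rewrite ltn_neqAle -ltnS ltn_ord andbT; apply: contra xm => /eqP E; apply/eqP/val_inj.
        have wx : w (Ordinal xn) = x by apply/val_inj.
        by exists (Ordinal xn); rewrite ?inE ?wx.
      by case=> y; rewrite inE => yC ->.
    by case=> C0 _ ->; exact: maxW.
  rewrite big_imset /=; last by move=> x y _ _; apply: W_inj.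
  by apply: eq_bigl => x; rewrite inE.
have -> : \sum_(C : {set 'I_n.+1} | ord_max \in C) F C = \sum_(C in [set Wm C0 | C0 in [set: {set 'I_n}]]) F C.
  apply: eq_bigl => C; apply/idP/imsetP.
    move=> H; exists (w @^-1: C); first by [].
    apply/setP => x; rewrite !inE; apply/idP/idP.
      move=> xC; case: (eqVneq x ord_max) => //= xm.
      have xn : x < n by rewrite ltn_neqAle -ltnS ltn_ord andbT; apply: contra xm => /eqP E; apply/eqP/val_inj.
      apply/imsetP; exists (Ordinal xn); rewrite ?inE; last by apply/val_inj.
      by have -> : w (Ordinal xn) = x by apply/val_inj.
    by case/orP => [/eqP -> // | /imsetP [y]]; rewrite inE => yC ->.
  by case=> C0 _ ->; exact: setU11.
rewrite big_imset /=; last by move=> x y _ _; apply: Wm_inj.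
  by apply: eq_bigl => x; rewrite inE.
Qed.
End Aug.

Lemma fBier_sum m (D : {set {set 'I_m}}) j :
  fBier D j = \sum_(B : {set 'I_m}) \sum_(C : {set 'I_m}) (bier_face D (B, C) && (bier_nverts (B, C) == j) : nat).
Proof.
rewrite /fBier -(@card_pairs _ (fun B C => bier_face D (B, C) && (bier_nverts (B, C) == j))).
by apply: eq_card => -[B C]; rewrite !inE.
Qed.

Lemma card_set_sum (T : finType) (P : pred T) : #|[set x | P x]| = \sum_x (P x : nat).
Proof.
rewrite -sum1_card big_mkcond /=.
by apply: eq_bigr => x _; rewrite inE; case: (P x).
Qed.

Lemma cardn n (C : {set 'I_n}) : #|C| <= n.
Proof. by have := max_card (mem C); rewrite card_ord. Qed.
Arguments cardn {n}.

Lemma supersets n (B : {set 'I_n}) j : j <= n ->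
  \sum_(C : {set 'I_n}) ((B \subset C) && (#|B| + n - #|C| == j) : nat) = 'C(n - #|B|, n - j).
Proof.
move=> jn.
rewrite (reindex_inj (@setC_inj _)) /=.
have cB := cardn B.
have E : forall A : {set 'I_n}, (B \subset ~: A) && (#|B| + n - #|~: A| == j)
     = [&& A \subset ~: B, #|A| == j - #|B| & #|B| <= j].
  move=> A; rewrite subsetC; have := cardsC A; rewrite card_ord => cA.
  have := cardn A => cA'.
  case: (A \subset ~: B) => //=.
  set a := #|A|; set b := #|B|; set c := #|~: A| in cA *.
  apply/eqP/andP.
    move=> H; split; [apply/eqP|]; lia.
  case=> /eqP H1 H2; lia.
under eq_bigr do rewrite E.
case: (leqP #|B| j) => Hj.
  under eq_bigr do rewrite andbT.
  have -> : n - j = (n - #|B|) - (j - #|B|) by move: cB Hj jn; move: #|B| => b; lia.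
  rewrite bin_sub; last by move: cB Hj jn; move: #|B| => b; lia.
  have <- : #|~: B| = n - #|B| by have := cardsC B; rewrite card_ord; move: #|B| #|~: B| => b c; lia.
  by rewrite -cards_draws card_set_sum.
rewrite big1; last by move=> A _; rewrite !andbF.
by rewrite bin_small //; move: cB Hj jn; move: #|B| => b; lia.
Qed.

Lemma sum_by_card n (D : {set {set 'I_n}}) (phi : nat -> nat) :
  \sum_(B in D) phi #|B| = \sum_(k < n.+1) fD D k * phi k.
Proof.
rewrite (partition_big (fun B : {set 'I_n} => (inord #|B| : 'I_n.+1)) xpredT) //=.
apply: eq_bigr => k _.
rewrite /fD -sum1_card big_distrl /=.
rewrite big_mkcond [RHS]big_mkcond /=.
apply: eq_bigr => B _; rewrite inE.
case: (B \in D) => //=.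
have cB := cardn B.
have -> : (inord #|B| == k) = (#|B| == k).
  by rewrite -(inj_eq val_inj) /= inordK.
by case: eqP => // ->; rewrite mul1n.
Qed.

Lemma fBier_aug n (D : {set {set 'I_n}}) j : j <= n ->
  fBier (aug D) j = (if j is j'.+1 then fBier D j' else 0)
                    + \sum_(k < n.+1) fD D k * 'C(n - k, n - j).
Proof.
move=> jn.
rewrite -(sum_by_card _ D (fun k => 'C(n - k, n - j))) fBier_sum split_sum.
rewrite [X in _ + X = _]big1 ?addn0; last first.
  move=> B _; apply: big1 => C _.
  by rewrite /bier_face /= memWm_aug /= andbF.
transitivity (\sum_(B : {set 'I_n}) (\sum_(C : {set 'I_n}) (bier_face (aug D) (W n B, W n C) && (bier_nverts (W n B, W n C) == j) : nat)
   + \sum_(C : {set 'I_n}) (bier_face (aug D) (W n B, Wm n C) && (bier_nverts (W n B, Wm n C) == j) : nat))).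
  by apply: eq_bigr => B _; rewrite split_sum.
rewrite big_split /=; congr (_ + _).
  have E : forall B C : {set 'I_n},
      bier_face (aug D) (W n B, W n C) && (bier_nverts (W n B, W n C) == j)
      = bier_face D (B, C) && (#|B| + n.+1 - #|C| == j).
    by move=> B C; rewrite /bier_face /bier_nverts /= properW !memW_aug !cardW.
  under eq_bigr do under eq_bigr do rewrite E.
  clear E; case: j jn => [|j] jn.
    apply: big1 => B _; apply: big1 => C _.
    by rewrite addnS subSn ?andbF //; have := cardn C; move: #|C| => c; lia.
  rewrite fBier_sum; apply: eq_bigr => B _; apply: eq_bigr => C _.
  rewrite /bier_nverts /= addnS subSn ?eqSS //.
  by have := cardn C; move: #|C| => c; lia.
rewrite [RHS]big_mkcond /=.
apply: eq_bigr => B _.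
have E : forall C : {set 'I_n},
    bier_face (aug D) (W n B, Wm n C) && (bier_nverts (W n B, Wm n C) == j)
    = (B \in D) && ((B \subset C) && (#|B| + n - #|C| == j)).
  move=> C; rewrite /bier_face /bier_nverts /= properWm memW_aug memWm_aug cardW cardWm.
  rewrite addnS subSS.
  by case: (B \subset C); case: (B \in D).
under eq_bigr do rewrite E.
case: (B \in D) => /=; last by apply: big1.
exact: supersets.
Qed.

Local Open Scope ring_scope.

Lemma coefXD1 (a b : nat) : ((('X + 1) ^+ a : {poly int})`_b) = ('C(a, b))%:R.
Proof.
rewrite exprD1n coef_sum.
under eq_bigr do rewrite coefMn coefXn.
case: (leqP b a) => ba.
  rewrite (bigD1 (inord b)) /=; last by [].
  rewrite inordK // eqxx mulr1n big1 ?addr0 // => i ib.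
  have -> : (b == i) = false.
    apply/negbTE; apply: contra ib => /eqP E; apply/eqP/val_inj; rewrite /= inordK //; lia.
  by rewrite mul0rn.
rewrite bin_small // big1 // => i _.
have -> : (b == i) = false by apply/negbTE; move: (ltn_ord i); lia.
by rewrite mul0rn.
Qed.

Lemma alt_bin (M b : nat) :
  \sum_(a < M.+1) (-1) ^+ a * ('C(M, a) * 'C(a, b))%:R = (-1) ^+ b * (M == b)%:R :> int.
Proof.
have H := congr1 (fun p : {poly int} => p`_b) (exprD1n (- ('X + 1)) M).
move: H => /=.
have -> : - ('X + 1) + 1 = (-1) *: ('X : {poly int}) by rewrite scaleN1r opprD addrNK.
rewrite exprZn coefZ coefXn coef_sum.
rewrite (eq_bigr (fun a : 'I_M.+1 => (-1)^+a * ('C(a,b))%:R *+ 'C(M,a))); last first.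
  by move=> a _; rewrite coefMn -scaleN1r exprZn coefZ coefXD1.
move=> H.
have -> : (-1) ^+ b * (M == b)%:R = (-1) ^+ M * (b == M)%:R :> int.
  by rewrite eq_sym; case: eqP => [->|]; rewrite ?mulr0.
rewrite H; apply: eq_bigr => a _.
by rewrite natrM -mulr_natr; ring.
Qed.

Lemma signE (x y p q : nat) : (x + p.*2 = y + q.*2)%N -> (-1) ^+ x = (-1) ^+ y :> int.
Proof.
move=> E.
have hx : forall z r : nat, (-1) ^+ z = (-1) ^+ (z + r.*2)%N :> int.
  by move=> z r; rewrite exprD -muln2 exprM sqrr_sign mulr1.
by rewrite (hx x p) (hx y q) E.
Qed.

Lemma core (N i k : nat) : (i <= N)%N -> (k <= N)%N ->
  \sum_(j < N.+1) (-1) ^+ (i + j) * ('C(N - j, N - i))%:Z * ('C(N - k, N - j))%:Z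
  = (k == i)%:Z.
Proof.
move=> iN kN.
rewrite (reindex_inj rev_ord_inj) /=.
rewrite (eq_bigr (fun a : 'I_N.+1 => (-1) ^+ (N - i) * ((-1) ^+ a * ('C(N - k, a) * 'C(a, N - i))%:R))); last first.
  move=> a _; rewrite subSS.
  have aN : (a <= N)%N by rewrite -ltnS.
  rewrite subKn // natrM !natz mulrA mulrA -exprD -!mulrA [_ * 'C(N - k, a)%:Z]mulrC.
  congr (_ * _); apply: (signE _ _ a i); lia.
rewrite -big_distrr /=.
have MN : (N - k < N.+1)%N by lia.
have -> : \sum_(a < N.+1) (-1) ^+ a * ('C(N - k, a) * 'C(a, N - i))%:R
        = \sum_(a < (N - k).+1) (-1) ^+ a * ('C(N - k, a) * 'C(a, N - i))%:R :> int.
  rewrite (big_ord_widen N.+1 (fun a => (-1) ^+ a * ('C(N - k, a) * 'C(a, N - i))%:R : int) MN).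
  rewrite [RHS]big_mkcond /=; apply: eq_bigr => a _.
  case: ltnP => // Ha; by rewrite bin_small ?mul0n ?mulr0.
rewrite alt_bin signrMK -natz.
congr (_%:R); apply/eqP/eqP; lia.
Qed.

Theorem mainTheorem11 (n : nat) (D : {set {set 'I_n}}) :
  (2 <= n)%N -> is_proper_ideal D ->
  forall i : nat, (i <= n)%N ->
    hBier (aug D) i
    = (if i is i'.+1 then hBier D i' else 0) + (fD D i)%:Z.
Proof.
move=> n2 HD i iN.
rewrite /hBier. have -> : (i <= n.+1.-1)%N := iN.
change (n.+1.-1) with n; rewrite big_mkord.
rewrite (eq_bigr (fun j : 'I_n.+1 =>
   (-1) ^+ (i + j) * ('C(n - j, n - i))%:Z * (if (j : nat) is j'.+1 then fBier D j' else 0%N)%:Z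
 + (-1) ^+ (i + j) * ('C(n - j, n - i))%:Z * (\sum_(k < n.+1) fD D k * 'C(n - k, n - j))%:Z)); last first.
  move=> j _; rewrite fBier_aug; last by rewrite -ltnS.
  by rewrite PoszD mulrDr.
rewrite big_split; congr (_ + _).
  rewrite big_ord_recl /= mulr0 add0r.
  case: i iN => [|i] iN.
    apply: big1 => j _; rewrite bin_small ?mulr0 ?mul0r //.
    rewrite /bump leq0n add1n; lia.
  have -> : (i <= n.-1)%N by lia.
  rewrite big_mkord; apply: eq_bigr => j _.
  rewrite /bump leq0n add1n add0n addSn addnS !exprS !mulN1r opprK.
  by congr (_ * (Posz 'C(_, _)) * _); lia.

under eq_bigr do rewrite -!natz natr_sum big_distrr.
rewrite exchange_big.
rewrite (eq_bigr (fun k : 'I_n.+1 => (fD D k)%:R * (k == i :> nat)%:R)); last first.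
  move=> k _; rewrite [X in _ * X]natz -(core n i k) //; last by rewrite -ltnS.
  rewrite big_distrr; apply: eq_bigr => j _.
  by rewrite natrM !natz; exact: mulrCA.
rewrite (bigD1 (inord i)) // inordK // eqxx mulr1 big1; first by rewrite -[RHS]natz; exact: addr0.
move=> k ki.
have -> : (k == i :> nat) = false.
  by apply/negbTE; apply: contra ki => /eqP E; apply/eqP/val_inj; rewrite /= inordK.
by rewrite mulr0.
Qed.
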